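(* Let $\Sigma$ be a real symmetric positive semidefinite $n\times n$ matrix, let \[\mathcal S(\Sigma)=\{(\hat\Sigma,\tilde\Sigma)\mid \Sigma=\hat\Sigma+\tilde\Sigma,\ \hat\Sigma\ge0,\ \tilde\Sigma\ge 0,\ \tilde\Sigma\text{ diagonal}\},\] and for $K\in\mathbb R^{n\times n}$ let $L(K,\hat\Sigma,\tilde\Sigma)=\operatorname{trace}(\hat\Sigma-K\hat\Sigma-\hat\Sigma K'+K(\hat\Sigma+\tilde\Sigma)K')$. Then \[\min_{K}\max_{(\hat\Sigma,\tilde\Sigma)\in\mathcal S(\Sigma)}L(K,\hat\Sigma,\tilde\Sigma)=\max_{(\hat\Sigma,\tilde\Sigma)\in\mathcal S(\Sigma)}\min_K L(K,\hat\Sigma,\tilde\Sigma).\]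
   Context: All matrices $\hat\Sigma,\tilde\Sigma$ are real symmetric $n\times n$; $M\ge0$ means positive semidefinite. *)

(* Defs.v *)
From mathcomp Require Import all_boot all_order all_algebra.
From mathcomp Require Import reals.
Set Implicit Arguments. Unset Strict Implicit. Unset Printing Implicit Defensive.
Import Order.TTheory GRing.Theory Num.Theory.
Local Open Scope ring_scope.

Section Defs.
Variable R : realType.

Definition psd n (A : 'M[R]_n) : Prop :=
  A^T = A /\ forall x : 'cV[R]_n, 0 <= (x^T *m A *m x) ord0 ord0.

Definition symmetric n (A : 'M[R]_n) : Prop := A^T = A.

Definition Sset n (Sigma : 'M[R]_n) (p : 'M[R]_n * 'M[R]_n) : Prop :=
  Sigma = p.1 + p.2 /\ psd p.1 /\ psd p.2 /\ is_diag_mx p.2.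

Definition Lfun n (K Sh St : 'M[R]_n) : R :=
  \tr (Sh - K *m Sh - Sh *m K^T + K *m (Sh + St) *m K^T).

Definition is_max_of T (P : T -> Prop) (f : T -> R) (m : R) : Prop :=
  (exists x, P x /\ f x = m) /\ forall x, P x -> f x <= m.

Definition is_min_of T (P : T -> Prop) (f : T -> R) (m : R) : Prop :=
  (exists x, P x /\ f x = m) /\ forall x, P x -> m <= f x.

(* v = min_K max_{p in S(Sigma)} L(K,p), with all extrema existing *)
Definition is_minmax_value n (Sigma : 'M[R]_n) (v : R) : Prop :=
  (forall K : 'M[R]_n, exists m, is_max_of (Sset Sigma) (fun p => Lfun K p.1 p.2) m)
  /\ (exists K0 : 'M[R]_n, is_max_of (Sset Sigma) (fun p => Lfun K0 p.1 p.2) v)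
  /\ (forall (K : 'M[R]_n) m,
        is_max_of (Sset Sigma) (fun p => Lfun K p.1 p.2) m -> v <= m).

(* v = max_{p in S(Sigma)} min_K L(K,p), with all extrema existing *)
Definition is_maxmin_value n (Sigma : 'M[R]_n) (v : R) : Prop :=
  (forall p, Sset Sigma p -> exists m, is_min_of (fun _ : 'M[R]_n => True) (fun K => Lfun K p.1 p.2) m)
  /\ (exists p0, Sset Sigma p0 /\
        is_min_of (fun _ : 'M[R]_n => True) (fun K => Lfun K p0.1 p0.2) v)
  /\ (forall p m, Sset Sigma p ->
        is_min_of (fun _ : 'M[R]_n => True) (fun K => Lfun K p.1 p.2) m -> m <= v).

End Defs.

(* Main.v *)
Require Import Defs.
From mathcomp Require Import all_boot all_order all_algebra.
From mathcomp Require Import reals ring lra.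
From mathcomp Require Import finmap.
From mathcomp Require Import boolp classical_sets topology normedtype matrix_normedtype.
Import Order.TTheory GRing.Theory Num.Theory.
Import numFieldNormedType.Exports.
Local Open Scope ring_scope.
Local Open Scope classical_set_scope.

Lemma trE (R : realType) n (A : 'M[R]_n) : \tr A = \sum_i A i i.
Proof. by []. Qed.
Lemma tr_mulT (R : realType) n (A B : 'M[R]_n) : \tr (A *m B^T) = \tr (B *m A^T).
Proof. by rewrite -mxtrace_tr trmx_mul trmxK. Qed.
Lemma tr_mul_diag (R : realType) n (A : 'M[R]_n) d :
  \tr (A *m diag_mx d) = \sum_i A i i * d ord0 i.
Proof. by rewrite trE; apply: eq_bigr => i _; rewrite mul_mx_diag mxE. Qed.

Definition G {R : realType} {n} (S K : 'M[R]_n) (d : 'rV[R]_n) :=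
  Lfun K (S - diag_mx d) (diag_mx d).

Lemma Lfun_exp (R : realType) n (K Sh St : 'M[R]_n) :
  Lfun K Sh St = \tr Sh - \tr (K *m Sh) - \tr (Sh *m K^T)
                 + \tr (K *m (Sh + St) *m K^T).
Proof. by rewrite /Lfun !mxtraceD !raddfN. Qed.

Lemma G_sym (R : realType) n (S K : 'M[R]_n) d : S^T = S ->
  G S K d = \tr S - \tr (diag_mx d) - 2 * (\tr (K *m S) - \tr (K *m diag_mx d))
            + \tr (K *m S *m K^T).
Proof.
move=> hS; rewrite /G Lfun_exp subrK tr_mulT.
have -> : (S - diag_mx d)^T = S - diag_mx d.
  by rewrite [LHS]linearB /= hS tr_diag_mx.
rewrite mulmxBr !raddfB /=; ring.
Qed.

Lemma G_affine (R : realType) n (S K : 'M[R]_n) d : S^T = S ->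
  G S K d = G S K 0 + \sum_i (2 * K i i - 1) * d ord0 i.
Proof.
move=> hS; rewrite !G_sym // !tr_mul_diag !mxtrace_diag.
have -> : \sum_i (2 * K i i - 1) * d ord0 i
   = 2 * \sum_i K i i * d ord0 i - \sum_i d ord0 i.
  by rewrite mulr_sumr -sumrB; apply: eq_bigr => i _; ring.
have -> : \sum_(i < n) K i i * (0 : 'rV[R]_n) ord0 i = 0.
  by rewrite big1 // => i _; rewrite mxE mulr0.
have -> : \sum_(i < n) (0 : 'rV[R]_n) ord0 i = 0.
  by rewrite big1 // => i _; rewrite mxE.
ring.
Qed.

Lemma G_ident0 (R : realType) n (S K0 E : 'M[R]_n) d0 d : S^T = S ->
  K0 *m S = S - diag_mx d0 ->
  G S (K0 + E) d = G S K0 d + \tr (E *m S *m E^T)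
            + 2 * \tr (E *m (diag_mx d - diag_mx d0)).
Proof.
move=> hS hK0.
have hSK : S *m K0^T = S - diag_mx d0.
  by rewrite -[S in S *m _]hS -trmx_mul hK0 [LHS]linearB /= hS tr_diag_mx.
rewrite !G_sym //.
rewrite [(K0 + E)^T]linearD /= !mulmxDl !mulmxDr !raddfD /=.
rewrite -[K0 *m S *m K0^T]mulmxA -[E *m S *m K0^T]mulmxA hSK hK0.
rewrite tr_mulT.
have -> : (S - diag_mx d0)^T = S - diag_mx d0.
  by rewrite [LHS]linearB /= hS tr_diag_mx.
rewrite !mulmxBr !raddfB /=.
ring.
Qed.

Lemma G_ident (R : realType) n (S K0 K : 'M[R]_n) d0 d : S^T = S ->
  K0 *m S = S - diag_mx d0 ->
  G S K d = G S K0 d + \tr ((K - K0) *m S *m (K - K0)^T)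
            + 2 * \tr ((K - K0) *m (diag_mx d - diag_mx d0)).
Proof.
move=> hS hK0; rewrite -G_ident0 //; congr G; by rewrite addrC subrK.
Qed.

Lemma qf_diag (R : realType) n (d : 'rV[R]_n) (y : 'cV[R]_n) :
  (y^T *m diag_mx d *m y) ord0 ord0 = \sum_j y j ord0 * d ord0 j * y j ord0.
Proof. by rewrite mul_mx_diag mxE; apply: eq_bigr => j _; rewrite !mxE. Qed.
Lemma qfB (R : realType) n (A B : 'M[R]_n) (y : 'cV[R]_n) :
  (y^T *m (A - B) *m y) ord0 ord0 =
  (y^T *m A *m y) ord0 ord0 - (y^T *m B *m y) ord0 ord0.
Proof. by rewrite mulmxBr mulmxBl !mxE. Qed.
Lemma tr_qf (R : realType) n (E P : 'M[R]_n) :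
  \tr (E *m P *m E^T) = \sum_i ((row i E)^T^T *m P *m (row i E)^T) ord0 ord0.
Proof.
rewrite trE; apply: eq_bigr => i _; rewrite trmxK !mxE.
apply: eq_bigr => j _; rewrite !mxE; congr (_ * _).
by apply: eq_bigr => k _; rewrite !mxE.
Qed.

Lemma tr_qf_ge0 (R : realType) n (E P : 'M[R]_n) :
  (forall y : 'cV[R]_n, 0 <= (y^T *m P *m y) ord0 ord0) ->
  0 <= \tr (E *m P *m E^T).
Proof. by move=> hP; rewrite tr_qf; apply: sumr_ge0 => i _; apply: hP. Qed.

Lemma diag_bound (R : realType) n (S E : 'M[R]_n) (d : 'rV[R]_n) :
  (forall i, 0 <= d ord0 i) ->
  (forall y : 'cV[R]_n, 0 <= (y^T *m (S - diag_mx d) *m y) ord0 ord0) ->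
  \sum_i d ord0 i * E i i ^+ 2 <= \tr (E *m S *m E^T).
Proof.
move=> hd hSd.
have -> : E *m S *m E^T = E *m (S - diag_mx d) *m E^T + E *m diag_mx d *m E^T.
  by rewrite -mulmxDl -mulmxDr subrK.
rewrite mxtraceD -[X in X <= _]add0r; apply: lerD; first exact: tr_qf_ge0.
rewrite tr_qf; apply: ler_sum => i _; rewrite qf_diag (bigD1 i) //= !mxE.
rewrite -[X in X <= _]addr0; apply: lerD; first by rewrite expr2; nra.
apply: sumr_ge0 => j _; rewrite !mxE; have := hd j; nra.
Qed.

Lemma env_bound (R : realType) n (S E : 'M[R]_n) (d1 d2 : 'rV[R]_n) (t : R) :
  (forall i, 0 <= d1 ord0 i) ->
  (forall y : 'cV[R]_n, 0 <= (y^T *m (S - diag_mx d1) *m y) ord0 ord0) ->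
  (forall i, 0 <= d2 ord0 i) ->
  (forall y : 'cV[R]_n, 0 <= (y^T *m (S - diag_mx d2) *m y) ord0 ord0) ->
  - (2 * t ^+ 2 * \sum_i (d1 ord0 i + d2 ord0 i)) <=
  \tr (E *m S *m E^T) + 2 * t * \tr (E *m (diag_mx d1 - diag_mx d2)).
Proof.
move=> h1 hS1 h2 hS2.
have a1 := @diag_bound _ _ S E d1 h1 hS1; have a2 := @diag_bound _ _ S E d2 h2 hS2.
rewrite mulmxBr raddfB /= !tr_mul_diag.
have key : 0 <= \sum_i (2 * t * (E i i * d1 ord0 i) - 2 * t * (E i i * d2 ord0 i)
   + (d1 ord0 i * E i i ^+ 2 + d2 ord0 i * E i i ^+ 2) / 2
   + 2 * t ^+ 2 * (d1 ord0 i + d2 ord0 i)).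
  apply: sumr_ge0 => i _; have := h1 i; have := h2 i.
  move: (d1 ord0 i) (d2 ord0 i) (E i i) => x y e hy hx.
  have -> : 2 * t * (e * x) - 2 * t * (e * y) + (x * e ^+ 2 + y * e ^+ 2) / 2 +
    2 * t ^+ 2 * (x + y) = x * (e + 2 * t) ^+ 2 / 2 + y * (e - 2 * t) ^+ 2 / 2.
    by field.
  by rewrite addr_ge0 // divr_ge0 // mulr_ge0 // sqr_ge0.
have e : \sum_i (2 * t * (E i i * d1 ord0 i) - 2 * t * (E i i * d2 ord0 i)
   + (d1 ord0 i * E i i ^+ 2 + d2 ord0 i * E i i ^+ 2) / 2
   + 2 * t ^+ 2 * (d1 ord0 i + d2 ord0 i)) =
   2 * t * \sum_i (E i i * d1 ord0 i) - 2 * t * \sum_i (E i i * d2 ord0 i)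
   + (\sum_i (d1 ord0 i * E i i ^+ 2) + \sum_i (d2 ord0 i * E i i ^+ 2)) / 2
   + 2 * t ^+ 2 * \sum_i (d1 ord0 i + d2 ord0 i).
  by rewrite !big_split /= sumrN -!mulr_sumr -mulr_suml !big_split.
rewrite e in key; lra.
Qed.


Lemma quad0 (R : realType) (a b : R) : 0 <= a -> 0 <= b ->
  (forall t, 0 <= 2 * t * a + t ^+ 2 * b) -> a = 0.
Proof.
move=> ha hb H.
have hw : b + 1 != 0 by apply/negP => /eqP; lra.
pose t := - a / (b + 1).
have htw : t * (b + 1) = - a by rewrite /t; field.
have h1 : 0 <= (2 * t * a + t ^+ 2 * b) * (b + 1) ^+ 2.
  by apply: mulr_ge0; [apply: H | apply: sqr_ge0].
have e : (2 * t * a + t ^+ 2 * b) * (b + 1) ^+ 2 =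
   2 * a * (t * (b + 1)) * (b + 1) + b * (t * (b + 1)) ^+ 2 by ring.
rewrite e htw in h1.
nra.
Qed.

Lemma psd_ker (R : realType) n (P : 'M[R]_n) (v : 'cV[R]_n) :
  P^T = P -> (forall y : 'cV[R]_n, 0 <= (y^T *m P *m y) ord0 ord0) ->
  (v^T *m P *m v) ord0 ord0 = 0 -> P *m v = 0.
Proof.
move=> hP hpsd hv.
set u := P *m v.
have ea : (v^T *m P *m u) ord0 ord0 = (u^T *m u) ord0 ord0.
  have tr1 : forall M : 'M[R]_1, M ord0 ord0 = M^T ord0 ord0 by move=> M; rewrite mxE.
  by rewrite tr1 !trmx_mul hP trmxK /u mulmxA.
have eb : (u^T *m P *m v) ord0 ord0 = (u^T *m u) ord0 ord0 by rewrite -mulmxA.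
have H : forall t, 0 <= 2 * t * (u^T *m u) ord0 ord0 + t ^+ 2 * (u^T *m P *m u) ord0 ord0.
  move=> t; have := hpsd (v + t *: u).
  have eT : (t *: u)^T = t *: u^T by apply/matrixP => i j; rewrite !mxE.
  rewrite [(v + _)^T]linearD /= eT !mulmxDl !mulmxDr.
  rewrite -(scalemxAr t (v^T *m P) u) -(scalemxAl t (u^T) P).
  rewrite -(scalemxAl t (u^T *m P) v) -(scalemxAl t (u^T *m P) (t *: u)).
  have sp : forall A B : 'M[R]_1, (A + B) ord0 ord0 = A ord0 ord0 + B ord0 ord0.
    by move=> A B; rewrite mxE.
  have sc : forall (c : R) (A : 'M[R]_1), (c *: A) ord0 ord0 = c * A ord0 ord0.
    by move=> c A; rewrite mxE.
  rewrite -(scalemxAr t (u^T *m P) u) !sp !sc hv ea eb.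
  move=> h; apply: le_trans h _; rewrite le_eqVlt; apply/orP; left; apply/eqP; ring.
have ua : (u^T *m u) ord0 ord0 = \sum_i u i ord0 ^+ 2.
  by rewrite mxE; apply: eq_bigr => i _; rewrite mxE expr2.
have hb : 0 <= (u^T *m P *m u) ord0 ord0 by apply: hpsd.
have a0 : 0 <= (u^T *m u) ord0 ord0 by rewrite ua; apply: sumr_ge0 => i _; apply: sqr_ge0.
have := @quad0 R _ _ a0 hb H; rewrite ua.
move/eqP; rewrite psumr_eq0; last by move=> i _; apply: sqr_ge0.
move/allP => hu; apply/matrixP => i j; rewrite (ord1 j) [RHS]mxE.
by have := hu i (mem_index_enum i); rewrite sqrf_eq0 /= => /eqP.
Qed.

Lemma col_mulA (R : realType) m n p (A : 'M[R]_(m, n)) (B : 'M[R]_(n, p)) j :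
  col j (A *m B) = A *m col j B.
Proof. by rewrite !colE mulmxA. Qed.

Lemma K0_exists (R : realType) n (S : 'M[R]_n) (d : 'rV[R]_n) : S^T = S ->
  (forall y : 'cV[R]_n, 0 <= (y^T *m diag_mx d *m y) ord0 ord0) ->
  (forall y : 'cV[R]_n, 0 <= (y^T *m (S - diag_mx d) *m y) ord0 ord0) ->
  (S - diag_mx d) *m pinvmx S *m S = S - diag_mx d.
Proof.
move=> hS hD hSD; apply: mulmxKpV; rewrite submxE; apply/eqP.
have hC := mulmx_coker S.
have hsym : (S - diag_mx d)^T = S - diag_mx d.
  by rewrite [LHS]linearB /= hS tr_diag_mx.
apply/matrixP => i j; rewrite [RHS]mxE.
set x := col j (cokermx S).
have hx : S *m x = 0 by rewrite /x -col_mulA hC col0.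
have q0 : (x^T *m S *m x) ord0 ord0 = 0 by rewrite -mulmxA hx mulmx0 mxE.
have q1 : (x^T *m (S - diag_mx d) *m x) ord0 ord0 = 0.
  have := hD x; have := hSD x; rewrite qfB q0; lra.
have := congr1 (fun M : 'cV[R]_n => M i ord0) (@psd_ker R n _ _ hsym hSD q1).
by rewrite /x -col_mulA mxE [RHS]mxE.
Qed.

Lemma affine_cont (R : realType) n (a : 'I_n -> R) (b : R) :
  continuous (fun v : 'rV[R]_n => b + \sum_i a i * v ord0 i).
Proof.
suff H : forall s : seq 'I_n,
    continuous (fun v : 'rV[R]_n => \sum_(i <- s) a i * v ord0 i).
  move=> x; apply: (@continuousD _ _ _ (fun=> b)); first exact: cst_continuous.
  exact: H.
elim=> [|j s IH].
  under [X in continuous X]funext => v do rewrite big_nil.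
  exact: cst_continuous.
under [X in continuous X]funext => v do rewrite big_cons.
move=> x; apply: (@continuousD _ _ _ (fun v : 'rV[R]_n => a j * v ord0 j)); last exact: IH.
apply: (@continuousM _ _ (fun=> a j) (fun v : 'rV[R]_n => v ord0 j)).
  exact: cst_continuous.
exact: coord_continuous.
Qed.

Lemma affine_closed (R : realType) n (a : 'I_n -> R) (b : R) :
  closed [set v : 'rV[R]_n | 0 <= b + \sum_i a i * v ord0 i].
Proof.
have h := proj1 (continuous_closedP _) (@affine_cont R n a b) _ (@closed_ge R 0).
exact: h.
Qed.

Lemma seq_max (R : realType) n (Fs : set 'rV[R]_n) (f : 'rV[R]_n -> R) x0 :
  Fs x0 -> forall s : seq 'rV[R]_n, (forall z, z \in s -> Fs z) ->
  exists y, Fs y /\ forall z, z \in s -> f z <= f y.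
Proof.
move=> hx0; elim=> [|x s IH] hs; first by exists x0; split.
have [y [hy hys]] : exists y, Fs y /\ forall z, z \in s -> f z <= f y.
  by apply: IH => z hz; apply: hs; rewrite in_cons hz orbT.
have hx : Fs x by apply: hs; rewrite in_cons eqxx.
have [hle|hlt] := leP (f x) (f y).
  exists y; split=> // z; rewrite in_cons => /orP [/eqP -> //|]; exact: hys.
exists x; split=> // z; rewrite in_cons => /orP [/eqP -> //|hz].
by apply: le_trans (hys z hz) (ltW hlt).
Qed.

Lemma maxlem (R : realType) n (A Fs : set 'rV[R]_n) (f : 'rV[R]_n -> R) :
  compact A -> Fs `<=` A -> (exists x, Fs x) ->
  (forall c, closed (Fs `&` [set x | c <= f x])) ->
  exists x, Fs x /\ forall y, Fs y -> f y <= f x.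
Proof.
move=> cA sFA [x0 hx0] hcl.
move: cA; rewrite compact_In0 => /(_ _ Fs (fun y => A `&` (Fs `&` [set x | f y <= f x]))).
case.
- by exists (fun y => Fs `&` [set x | f y <= f x]).
- move=> D' hD'.
  have [y [hy hyD]] : exists y, Fs y /\ forall z, z \in enum_fset D' -> f z <= f y.
    apply: (@seq_max R n Fs f x0 hx0) => z hz.
    by have := hD' z hz; rewrite inE.
  exists y => i /= hi; split; first exact: sFA.
  by split => //; apply: hyD.
move=> x hx; exists x; split; first by have [_ []] := hx x0 hx0.
by move=> y hy; have [_ []] := hx y hy.
Qed.

Definition Fs {R : realType} {n} (S : 'M[R]_n) (d : 'rV[R]_n) : Prop :=
  forall y : 'cV[R]_n, 0 <= \sum_j (y j ord0 * y j ord0) * d ord0 j /\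
    0 <= (y^T *m S *m y) ord0 ord0 - \sum_j (y j ord0 * y j ord0) * d ord0 j.

Lemma qf_diag' {R : realType} {n} (d : 'rV[R]_n) (y : 'cV[R]_n) :
  (y^T *m diag_mx d *m y) ord0 ord0 = \sum_j (y j ord0 * y j ord0) * d ord0 j.
Proof. by rewrite qf_diag; apply: eq_bigr => j _; ring. Qed.

Lemma Fs_forms {R : realType} {n} (S : 'M[R]_n) d : Fs S d <->
  (forall y : 'cV[R]_n, 0 <= (y^T *m diag_mx d *m y) ord0 ord0) /\
  (forall y : 'cV[R]_n, 0 <= (y^T *m (S - diag_mx d) *m y) ord0 ord0).
Proof.
split=> [h|[h1 h2] y].
  by split=> y; rewrite ?qfB qf_diag'; case: (h y).
by have := h1 y; have := h2 y; rewrite qfB !qf_diag'.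
Qed.

Definition ev {R : realType} {n} (i : 'I_n) : 'cV[R]_n := delta_mx i ord0.

Lemma qf_delta {R : realType} {n} (M : 'M[R]_n) i :
  ((ev i)^T *m M *m ev i) ord0 ord0 = M i i.
Proof. by rewrite /ev trmx_delta -rowE -colE !mxE. Qed.

Lemma Fs_nonneg {R : realType} {n} (S : 'M[R]_n) d i : Fs S d -> 0 <= d ord0 i.
Proof.
move=> h; have [h1 _] := (Fs_forms S d).1 h.
by have := h1 (ev i); rewrite qf_delta mxE eqxx mulr1n.
Qed.

Lemma Fs_upper {R : realType} {n} (S : 'M[R]_n) d i : Fs S d -> d ord0 i <= S i i.
Proof.
move=> h; have [_ h2] := (Fs_forms S d).1 h.
by have := h2 (ev i); rewrite qf_delta !mxE eqxx mulr1n subr_ge0.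
Qed.

Lemma lin_comb {R : realType} {n} (a : 'I_n -> R) (x y : 'rV[R]_n) t :
  \sum_j a j * (x + t *: (y - x)) ord0 j =
  (1 - t) * \sum_j a j * x ord0 j + t * \sum_j a j * y ord0 j.
Proof. by rewrite !mulr_sumr -big_split /=; apply: eq_bigr => j _; rewrite !mxE; ring. Qed.

Lemma Fs_conv {R : realType} {n} (S : 'M[R]_n) x y t :
  Fs S x -> Fs S y -> 0 <= t -> t <= 1 -> Fs S (x + t *: (y - x)).
Proof.
move=> hx hy t0 t1 z; rewrite lin_comb; have [a1 a2] := hx z; have [b1 b2] := hy z.
split; nra.
Qed.

Definition box {R : realType} {n} (S : 'M[R]_n) : set 'rV[R]_n :=
  [set v | forall i, `[0, S i i]%classic (v ord0 i)].

Lemma box_compact {R : realType} {n} (S : 'M[R]_n) : compact (box S).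
Proof. exact: (@rV_compact _ n (fun i => `[0, S i i]%classic) (fun i => @segment_compact R 0 (S i i))). Qed.

Lemma Fs_box {R : realType} {n} (S : 'M[R]_n) : [set d | Fs S d] `<=` box S.
Proof.
move=> d hd i /=; rewrite in_itv /=.
by rewrite (Fs_nonneg _ _ _ hd) (Fs_upper _ _ _ hd).
Qed.

Lemma Fs_closed {R : realType} {n} (S : 'M[R]_n) : closed [set d | Fs S d].
Proof.
have -> : [set d | Fs S d] = \bigcap_(y in [set: 'cV[R]_n])
   ([set d : 'rV[R]_n | 0 <= 0 + \sum_j (y j ord0 * y j ord0) * d ord0 j] `&`
    [set d | 0 <= (y^T *m S *m y) ord0 ord0
                  + \sum_j (- (y j ord0 * y j ord0)) * d ord0 j]).
  apply/seteqP; split => d /=.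
    move=> h y _ /=; have [h1 h2] := h y; rewrite add0r; split => //.
    by under eq_bigr do rewrite mulNr; rewrite sumrN.
  move=> h y; have [/= h1 h2] := h y I; rewrite add0r in h1; split => //.
  by move: h2; under eq_bigr do rewrite mulNr; rewrite sumrN.
apply: closed_bigI => y _; apply: closedI; exact: affine_closed.
Qed.

Lemma lin_level_closed {R : realType} {n} (S K : 'M[R]_n) c : S^T = S ->
  closed [set d | c <= G S K d].
Proof.
move=> hS.
have -> : [set d | c <= G S K d] =
    [set d | 0 <= (G S K 0 - c) + \sum_i (2 * K i i - 1) * d ord0 i].
  by apply/seteqP; split => d /=; rewrite (@G_affine R n S K d hS) => h; lra.
exact: affine_closed.
Qed.

Lemma lin_closed {R : realType} {n} (S K : 'M[R]_n) c : S^T = S ->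
  closed ([set d | Fs S d] `&` [set d | c <= G S K d]).
Proof. by move=> hS; apply: closedI; [exact: Fs_closed | exact: lin_level_closed]. Qed.

Definition Kof {R : realType} {n} (S : 'M[R]_n) (d : 'rV[R]_n) :=
  (S - diag_mx d) *m pinvmx S.
Definition phi {R : realType} {n} (S : 'M[R]_n) (d : 'rV[R]_n) := G S (Kof S d) d.

Lemma Kof_eq {R : realType} {n} (S : 'M[R]_n) d : S^T = S -> Fs S d ->
  Kof S d *m S = S - diag_mx d.
Proof. by move=> hS hd; have [h1 h2] := (Fs_forms S d).1 hd; exact: K0_exists. Qed.

Lemma phi_min {R : realType} {n} (S : 'M[R]_n) d K : S^T = S ->
  (forall y : 'cV[R]_n, 0 <= (y^T *m S *m y) ord0 ord0) -> Fs S d ->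
  phi S d <= G S K d.
Proof.
move=> hS hpsd hd.
rewrite /phi (@G_ident R n S (Kof S d) K d d hS (Kof_eq S d hS hd)).
rewrite subrr mulmx0 linear0 mulr0 addr0 -[X in X <= _]addr0 lerD2l.
exact: tr_qf_ge0.
Qed.

Lemma phi_closed {R : realType} {n} (S : 'M[R]_n) c : S^T = S ->
  (forall y : 'cV[R]_n, 0 <= (y^T *m S *m y) ord0 ord0) ->
  closed ([set d | Fs S d] `&` [set d | c <= phi S d]).
Proof.
move=> hS hpsd.
have -> : [set d | Fs S d] `&` [set d | c <= phi S d] =
  [set d | Fs S d] `&` \bigcap_(K in [set: 'M[R]_n]) [set d | c <= G S K d].
  apply/seteqP; split => d /= [hd h]; split => //.
    by move=> K _ /=; apply: le_trans h (phi_min S d K hS hpsd hd).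
  exact: (h (Kof S d) I).
apply: closedI; first exact: Fs_closed.
by apply: closed_bigI => K _; exact: lin_level_closed.
Qed.

Lemma envelope {R : realType} {n} (S : 'M[R]_n) ds d' : S^T = S ->
  (forall y : 'cV[R]_n, 0 <= (y^T *m S *m y) ord0 ord0) -> Fs S ds ->
  (forall d, Fs S d -> phi S d <= phi S ds) -> Fs S d' ->
  G S (Kof S ds) d' <= G S (Kof S ds) ds.
Proof.
move=> hS hpsd hds hmax hd'.
set Ks := Kof S ds.
have hKs := Kof_eq S ds hS hds.
set c := \sum_i (d' ord0 i + ds ord0 i).
have c0 : 0 <= c.
  by apply: sumr_ge0 => i _; apply: addr_ge0; [exact: (Fs_nonneg S d') | exact: (Fs_nonneg S ds)].
rewrite leNgt; apply/negP => hlt.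
set A := G S Ks ds; set B := G S Ks d'.
have del0 : 0 < B - A by rewrite subr_gt0.
have hden : 2 * c + (B - A) != 0 by apply/negP => /eqP; lra.
pose t := (B - A) / (2 * c + (B - A)).
have htd : t * (2 * c + (B - A)) = B - A by rewrite /t divfK.
have ht0 : 0 < t by rewrite /t divr_gt0 //; lra.
have ht1 : t <= 1 by nra.
set dt := ds + t *: (d' - ds).
have hdt : Fs S dt by apply: Fs_conv => //; lra.
have key1 := hmax dt hdt.
have e1 := @G_ident R n S Ks (Kof S dt) ds dt hS hKs.
have ediag : diag_mx dt - diag_mx ds = t *: (diag_mx d' - diag_mx ds).
  apply/matrixP => i j; rewrite !mxE; case: (i == j); rewrite /= ?mulr1n ?mulr0n; ring.
rewrite ediag -scalemxAr linearZ /= in e1.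
have [f1 f2] := (Fs_forms S d').1 hd'.
have [g1 g2] := (Fs_forms S ds).1 hds.
have eb := @env_bound R n S (Kof S dt - Ks) d' ds t (fun i => Fs_nonneg S d' i hd') f2 (fun i => Fs_nonneg S ds i hds) g2.
have ea : G S Ks dt = (1 - t) * A + t * B.
  rewrite /A /B (@G_affine R n S Ks dt hS) (@G_affine R n S Ks ds hS).
  rewrite (@G_affine R n S Ks d' hS) /dt lin_comb; ring.
rewrite /phi -/Ks -/A e1 ea -/c in key1.
move: key1 eb.
set T := \tr _; set X := \tr _.
move=> key1 eb.
have e2 : (1 - t) * A + t * B = A + t * (B - A) by ring.
have e3 : 2 * t * X = 2 * (t * X) by ring.
rewrite e2 in key1; rewrite e3 -/c in eb.
have h2 : t * (B - A) <= 2 * t ^+ 2 * c by lra.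
have h3 : B - A <= 2 * t * c.
  have e4 : 2 * t ^+ 2 * c = t * (2 * t * c) by ring.
  by rewrite -(ler_pM2l ht0) -e4.
have h4 := mulr_gt0 ht0 del0.
have e5 : t * (2 * c + (B - A)) = 2 * t * c + t * (B - A) by ring.
rewrite e5 in htd.
have h5 : t * (B - A) <= 0.
  by rewrite -(addKr (2 * t * c) (t * (B - A))) htd addrC subr_le0.
by move: h4; rewrite ltNge h5.
Qed.

Lemma Fs_Sset {R : realType} {n} (S : 'M[R]_n) d : S^T = S -> Fs S d ->
  Sset S (S - diag_mx d, diag_mx d).
Proof.
move=> hS hd; have [h1 h2] := (Fs_forms S d).1 hd.
split; first by rewrite /= subrK.
split; first by split => //=; rewrite [LHS]linearB /= hS tr_diag_mx.
split; first by split => //=; rewrite tr_diag_mx.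
exact: diag_mx_is_diag.
Qed.

Lemma Sset_Fs {R : realType} {n} (S : 'M[R]_n) p : Sset S p ->
  exists d, p = (S - diag_mx d, diag_mx d) /\ Fs S d.
Proof.
case: p => Sh St [/= hsum [[_ h1] [[_ h2] /is_diag_mxP hdg]]].
pose d := \row_i St i i.
have hSt : St = diag_mx d.
  apply/matrixP => i j; rewrite !mxE; case: eqVneq => [->|hij].
    by rewrite mulr1n.
  by rewrite mulr0n; apply: hdg.
have hSh : Sh = S - St by rewrite hsum addrK.
exists d; split; first by rewrite hSh hSt.
apply/Fs_forms; split => y; first by rewrite -hSt.
by rewrite -hSt -hSh.
Qed.

Theorem proposition12 (R : realType) (n : nat) (Sigma : 'M[R]_n) :
  psd Sigma ->
  exists v : R, is_minmax_value Sigma v /\ is_maxmin_value Sigma v.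
Proof.
move=> [hS hpsd].
have F0 : Fs Sigma 0.
  move=> y; rewrite big1 => [|j _]; last by rewrite mxE mulr0.
  by rewrite subr0 lexx hpsd.
have [ds [hds hmax]] := @maxlem R n (box Sigma) [set d | Fs Sigma d] (phi Sigma)
  (box_compact Sigma) (Fs_box Sigma) (ex_intro _ 0 F0)
  (fun c => phi_closed Sigma c hS hpsd).
set Ks := Kof Sigma ds.
have env : forall d, Fs Sigma d -> G Sigma Ks d <= G Sigma Ks ds.
  by move=> d hd; apply: envelope.
have pmin : forall K, phi Sigma ds <= G Sigma K ds.
  by move=> K; apply: phi_min.
exists (phi Sigma ds); split; split.
- move=> K.
  have [dK [hdK hmaxK]] := @maxlem R n (box Sigma) [set d | Fs Sigma d] (G Sigma K)
    (box_compact Sigma) (Fs_box Sigma) (ex_intro _ 0 F0)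
    (fun c => lin_closed Sigma K c hS).
  exists (G Sigma K dK); split.
    by exists (Sigma - diag_mx dK, diag_mx dK); split => //; apply: Fs_Sset.
  by move=> p /Sset_Fs [d [-> hd]]; apply: hmaxK.
- split.
    exists Ks; split.
      by exists (Sigma - diag_mx ds, diag_mx ds); split => //; apply: Fs_Sset.
    by move=> p /Sset_Fs [d [-> hd]]; apply: env.
  move=> K m [_ hm].
  apply: le_trans (pmin K) _.
  by apply: (hm (Sigma - diag_mx ds, diag_mx ds)); apply: Fs_Sset.
- move=> p /Sset_Fs [d [-> hd]].
  exists (phi Sigma d); split; first by exists (Kof Sigma d).
  by move=> K _; apply: phi_min.
- split.
    exists (Sigma - diag_mx ds, diag_mx ds); split; first exact: Fs_Sset.
    split; first by exists Ks.
    by move=> K _; apply: pmin.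
  move=> p m /Sset_Fs [d [-> hd]] [_ hm].
  apply: le_trans (hm Ks I) _.
  exact: env.
Qed.
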